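(* Let $\Gamma$ be a rooted Eisenbud–Neumann diagram and $v_i$ a node which is not the root, has no node beyond it, and supports exactly one arrowhead $L_i$ (with near weight $\beta_{i1}$ and multiplicity $n_i$), all other neighbours of $v_i$ except the one towards the root being leaves, attached by edges with near weights $\beta_{i2},\dots,\beta_{ik_i}$. Let $\Gamma'$ (the collapse) be obtained by replacing $v_i$, $L_i$ and these leaves by a single arrowhead $L_i'$ at the end of the edge from the parent, with multiplicity $\beta n_i$, $\beta=\beta_{i2}\cdots\beta_{ik_i}$, all other weights and multiplicities unchanged. Then the linking matrix of $\Gamma$ in the basis $L_1,\dots,L_i,\dots,L_\nu$ equals the linking matrix of $\Gamma'$ in the basis $L_1,\dots,\beta L_i',\dots,L_\nu$ (so the two linking matrices are congruent over $\mathbb Q$). Moreover, if $\Gamma$ satisfies conditions (a) all near weights positive and no far weight zero, (b) negativity of a far weight at $v$ forces negativity of far weights at all nodes beyond $v$, (c) all vertex multiplicities positive, then so does $\Gamma'$.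
   Context: A rooted Eisenbud–Neumann (splice) diagram is a finite tree with a distinguished root vertex, whose vertices are nodes, leaves (valency one, not arrowheads) and arrowhead vertices $L_1,\dots,L_\nu$ carrying multiplicities $n_1,\dots,n_\nu$; at each node every incident edge carries a weight at that node (omitted weights equal $1$). At a node $v$, the weight on the edge leading from $v$ towards the root is the far weight at $v$; the weights at $v$ on the other incident edges are near weights at $v$. A node $w$ is beyond a node $v$ if the geodesic from $w$ to the root contains $v$. For distinct vertices $v,w$, $\mathrm{lk}(v,w)$ is the product of all edge weights adjacent to but not on the geodesic between $v$ and $w$. The multiplicity of a non-arrowhead vertex $v$ is $M_v=\sum_j n_j\,\mathrm{lk}(v,L_j)$. The linking matrix is $(\mathrm{lk}(L_i,L_j))$ with self-linking defined by $\mathrm{lk}(L_i,\sum_jn_jL_j)=0$; linking extends bilinearly to rational combinations of arrowheads. *)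

(* Defs.v *)
From HB Require Import structures.
From mathcomp Require Import all_boot all_order all_algebra.
Set Implicit Arguments. Unset Strict Implicit. Unset Printing Implicit Defensive.
Import Order.TTheory GRing.Theory Num.Theory.
Local Open Scope ring_scope.

(* A rooted Eisenbud--Neumann diagram whose vertices are taken from a finite
   type T.  [vert] is the vertex set, [par v] is the neighbour of v towards the
   root ([par root = root]); the edges are the pairs {v, par v}.
   [arrow v] marks arrowhead vertices, [mult a] is the multiplicity n_a of an
   arrowhead a, and [wt v w] is the weight at the node v on the edge vw. *)
Record diagram (T : finType) := Diagram {
  vert : {set T};
  droot : T;
  par : T -> T;
  arrow : T -> bool;
  wt : T -> T -> int;
  mult : T -> int
}.

Section Defs.
Variables (T : finType) (D : diagram T).

Definition nbr (v w : T) : bool :=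
  [&& v \in vert D, w \in vert D, v != w & (par D v == w) || (par D w == v)].

Definition valency (v : T) : nat := #|[set x | nbr v x]|.

Definition arrowv (v : T) : bool := (v \in vert D) && arrow D v.

Definition leaf (v : T) : bool :=
  [&& v \in vert D, ~~ arrow D v & valency v == 1%N].

Definition node (v : T) : bool :=
  [&& v \in vert D, ~~ arrow D v & valency v != 1%N].

Definition anc (v : T) : {set T} :=
  [set u | [exists k : 'I_#|T|.+1, iter k (par D) v == u]].

(* u lies on the geodesic between v and w *)
Definition onpath (v w u : T) : bool :=
  (u \in anc v :|: anc w) &&
  ~~ [exists x in anc v :&: anc w, (x != u) && (u \in anc x)].

(* lk(v,w): product of the edge weights adjacent to, but not on, the geodesic
   between v and w (weights sit at nodes). *)
Definition lk (v w : T) : int :=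
  \prod_(u | node u && onpath v w u)
     \prod_(x | nbr u x && ~~ onpath v w x) wt D u x.

Definition Mv (v : T) : int := \sum_(j | arrowv j) mult D j * lk v j.

Definition vmult (v : T) : int := if arrow D v then mult D v else Mv v.

(* linking matrix entries (rational), self-linking defined by
   lk(L_a, sum_j n_j L_j) = 0 *)
Definition lkm (a b : T) : rat :=
  if a != b then (lk a b)%:~R
  else - (\sum_(j | arrowv j && (j != a)) ((mult D j * lk a j)%:~R : rat))
         / (mult D a)%:~R.

Definition wf : Prop :=
  [/\ droot D \in vert D, par D (droot D) = droot D,
      (forall v, v \in vert D -> par D v \in vert D),
      (forall v, v \in vert D -> droot D \in anc v) &
      (forall v, arrowv v -> valency v = 1%N)].

Definition condA : Prop :=
  forall v, node v ->
    (forall x, nbr v x -> x != par D v -> 0 < wt D v x) /\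
    (v != droot D -> wt D v (par D v) != 0).

Definition condB : Prop :=
  forall v w, node v -> node w -> v != droot D -> v \in anc w ->
    wt D v (par D v) < 0 -> wt D w (par D w) < 0.

Definition condC : Prop := forall v, v \in vert D -> 0 < vmult v.

End Defs.

Definition beta (T : finType) (D : diagram T) (vi Li : T) : int :=
  \prod_(x | nbr D vi x && (x != par D vi) && (x != Li)) wt D vi x.

(* The collapse: remove L_i and the leaves at vi; vi itself becomes the new
   arrowhead L_i' (attached to the parent of vi) with multiplicity beta * n_i.
   Everything else is unchanged. *)
Definition collapse (T : finType) (D : diagram T) (vi Li : T) : diagram T :=
  Diagram (vert D :\: [set x | (par D x == vi) && (x != vi)])
          (droot D) (par D)
          (fun x => arrow D x || (x == vi))
          (wt D)
          (fun x => if x == vi then beta D vi Li * mult D Li else mult D x).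

(* Main.v *)
Require Import Defs.
From HB Require Import structures.
From mathcomp Require Import all_boot all_order all_algebra.
Set Implicit Arguments. Unset Strict Implicit. Unset Printing Implicit Defensive.
Import Order.TTheory GRing.Theory Num.Theory.
Local Open Scope ring_scope.

Lemma alg (x y s : rat) : -(x*s)/y = x*x*(-s/(x*y)).
Proof.
case: (eqVneq x 0) => [->|Hx]; first by rewrite !mul0r ?oppr0 ?mul0r ?mulr0.
rewrite invfM !mulNr mulrN; congr (- _).
by rewrite (mulrCA s) !mulrA -(mulrA x x) mulfV // mulr1.
Qed.

Section Gen.
Variables (T : finType) (G : diagram T).

Lemma onpathC v w u : onpath G v w u = onpath G w v u.
Proof. by rewrite /onpath setUC setIC. Qed.

Lemma lkC v w : lk G v w = lk G w v.
Proof.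
rewrite /lk; apply: eq_big => [u|u _]; first by rewrite onpathC.
by apply: eq_bigl => x; rewrite onpathC.
Qed.

Hypothesis Hwf : wf G.

Lemma par_vert v : v \in vert G -> par G v \in vert G.
Proof. by case: Hwf => _ _ H _ _; apply: H. Qed.

Lemma iter_vert n v : v \in vert G -> iter n (par G) v \in vert G.
Proof. by move=> Hv; elim: n => [|n IH] //=; apply: par_vert. Qed.

Lemma iter_root n : iter n (par G) (droot G) = droot G.
Proof. case: Hwf => _ Hr _ _ _; elim: n => [|n IH] //=; by rewrite IH Hr. Qed.

Lemma root_iter v : v \in vert G -> exists2 j, (j <= #|T|)%N & iter j (par G) v = droot G.
Proof.
move=> Hv; case: Hwf => _ _ _ H _; move: (H v Hv); rewrite inE.
by case/existsP => k /eqP Hk; exists k => //; rewrite -ltnS.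
Qed.

Lemma ancP v u : v \in vert G -> (u \in anc G v) <-> exists n, iter n (par G) v = u.
Proof.
move=> Hv; rewrite inE; split.
  by case/existsP => k /eqP <-; exists k.
case=> n <-; case: (leqP n #|T|) => Hn.
  by apply/existsP; exists (Ordinal (n:=#|T|.+1) (m:=n) Hn); rewrite eqxx.
case: (root_iter Hv) => j Hj Hjr.
apply/existsP; exists (Ordinal (n:=#|T|.+1) (m:=j) Hj) => /=.
have -> : n = (n - j + j)%N by rewrite subnK // (leq_trans Hj) // ltnW.
by rewrite iterD Hjr iter_root eqxx.
Qed.

Definition R v u := exists n, iter n (par G) v = u.

Lemma R_trans v u w : R v u -> R u w -> R v w.
Proof. by case=> n <- [m <-]; exists (m + n)%N; rewrite iterD. Qed.

Lemma R_vert v u : v \in vert G -> R v u -> u \in vert G.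
Proof. by move=> Hv [n <-]; apply: iter_vert. Qed.

Lemma cyc_root v t : v \in vert G -> (0 < t)%N -> iter t (par G) v = v -> v = droot G.
Proof.
move=> Hv Ht Hc.
have Hm : forall N, iter (N * t) (par G) v = v.
  by elim=> [|N IH] //=; rewrite mulSn iterD IH Hc.
case: (root_iter Hv) => j _ Hj.
have Hle : (j <= j * t)%N by rewrite leq_pmulr.
by rewrite -(Hm j) -(subnK Hle) iterD Hj iter_root.
Qed.

Lemma R_antisym v u : v \in vert G -> R v u -> R u v -> u = v.
Proof.
move=> Hv [k Hk] [m Hm].
case: (posnP (m + k)) => Hmk.
  by move/eqP: Hmk; rewrite addn_eq0 => /andP[/eqP Hm0 /eqP Hk0]; rewrite -Hk Hk0.
have Hc : iter (m + k) (par G) v = v by rewrite iterD Hk Hm.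
have Hr := cyc_root Hv Hmk Hc.
by rewrite -Hk Hr iter_root.
Qed.

End Gen.

Section Main.
Variables (T : finType) (G : diagram T) (vi Li : T).
Hypotheses (Hwf : wf G) (Hnode : node G vi) (Hnr : vi != droot G)
  (HLa : arrowv G Li) (HLn : nbr G vi Li) (HLp : Li != par G vi)
  (Huniq : forall a, arrowv G a -> nbr G vi a -> a = Li)
  (Hleaf : forall x, nbr G vi x -> x != par G vi -> x != Li -> leaf G x).

Local Notation G' := (collapse G vi Li).
Local Notation p := (par G vi).

Lemma vi_vert : vi \in vert G.
Proof. by case/and3P: Hnode. Qed.

Lemma Li_vert : Li \in vert G.
Proof. by case/andP: HLa. Qed.

Lemma par_Li : par G Li = vi.
Proof.
case/and4P: HLn => _ _ _ /orP[/eqP H|/eqP //].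
by move: HLp; rewrite H eqxx.
Qed.

Lemma Li_neq_vi : Li != vi.
Proof. by case/and4P: HLn => _ _; rewrite eq_sym. Qed.

Lemma p_neq_vi : p != vi.
Proof.
apply/negP => /eqP Hp; move/negP: Hnr; apply; apply/eqP.
by apply: (cyc_root Hwf vi_vert (t:=1)).
Qed.

Lemma pp_neq_vi : par G p != vi.
Proof.
apply/negP => /eqP Hpp; move/negP: p_neq_vi; apply; apply/eqP.
apply: (R_antisym Hwf vi_vert); first by exists 1%N.
by exists 1%N.
Qed.

Lemma valency1 x a b : valency G x = 1%N -> nbr G x a -> nbr G x b -> a = b.
Proof.
move=> /eqP /cards1P [y Hy] Ha Hb.
have : a \in [set y0 | nbr G x y0] by rewrite inE.
have : b \in [set y0 | nbr G x y0] by rewrite inE.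
by rewrite Hy !inE => /eqP -> /eqP ->.
Qed.

Lemma child_val x : x \in vert G -> x != vi -> par G x = vi -> valency G x = 1%N.
Proof.
move=> Hx Hxv Hpx.
have Hn : nbr G vi x by rewrite /nbr vi_vert Hx eq_sym Hxv Hpx eqxx orbT.
have Hxp : x != p.
  by apply/negP => /eqP Hxp; move/negP: pp_neq_vi; apply; rewrite -Hxp Hpx.
case: (boolP (x == Li)) => [/eqP ->|HxL].
  by case: Hwf => _ _ _ _ H; apply: H.
by case/and3P: (Hleaf Hn Hxp HxL) => _ _ /eqP.
Qed.

Lemma child_nochild x y : x \in vert G -> x != vi -> par G x = vi ->
  y \in vert G -> y != x -> par G y = x -> False.
Proof.
move=> Hx Hxv Hpx Hy Hyx Hpy.
have H1 : nbr G x vi by rewrite /nbr Hx vi_vert Hxv Hpx eqxx.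
have H2 : nbr G x y by rewrite /nbr Hx Hy eq_sym Hyx Hpy eqxx orbT.
have Hyv := valency1 (child_val Hx Hxv Hpx) H1 H2.
move/negP: pp_neq_vi; apply; apply/eqP; by rewrite {1}Hyv Hpy Hpx.
Qed.

Lemma lemD n v : v \in vert G -> iter n (par G) v = vi -> v = vi \/ par G v = vi.
Proof.
elim: n v => [|n IH] v Hv; first by move=> /= ->; left.
rewrite iterSr => Hi; case: (IH _ (par_vert Hwf Hv) Hi) => H; first by right.
exfalso; set c := par G v in H.
have Hc : c \in vert G by apply: par_vert.
have Hcv : c != vi.
  apply/negP => /eqP Hcv; move/negP: p_neq_vi; apply; apply/eqP.
  by rewrite -{1}Hcv H.
apply: (child_nochild Hc Hcv H Hv _ erefl).
apply/negP => /eqP Hvc; move/negP: Hcv; apply; apply/eqP.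
by rewrite -H -Hvc -/c.
Qed.


Lemma vertE x : (x \in vert G') = (x \in vert G) && ~~((par G x == vi) && (x != vi)).
Proof. by rewrite /= !inE andbC. Qed.

Lemma vert'_vert x : x \in vert G' -> x \in vert G.
Proof. by rewrite vertE => /andP[]. Qed.

Lemma vi_vert' : vi \in vert G'.
Proof. by rewrite vertE vi_vert eqxx andbF. Qed.

Lemma Li_vert' : (Li \in vert G') = false.
Proof. by rewrite vertE par_Li eqxx Li_neq_vi andbF. Qed.

Lemma notR x : x \in vert G' -> x != vi -> ~ R G x vi.
Proof.
rewrite vertE => /andP[Hx Hn] Hxv [n Hi].
case: (lemD Hx Hi) => H; first by rewrite H eqxx in Hxv.
by rewrite H eqxx Hxv in Hn.
Qed.

Lemma nbr'E u x : nbr G' u x = [&& nbr G u x, u \in vert G' & x \in vert G'].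
Proof.
rewrite /nbr /=.
case Hu: (u \in _ :\: _); case Hx: (x \in _ :\: _); rewrite ?andbF ?andbT //=.
by move: Hu Hx; rewrite !inE => /andP[_ ->] /andP[_ ->].
Qed.

Lemma nbr_vert' u x : u \in vert G' -> u != vi -> nbr G u x -> x \in vert G'.
Proof.
move=> Hu Huv Hn; have Hu0 := vert'_vert Hu.
case/and4P: Hn => _ Hx Hux Hp.
rewrite vertE Hx /=; apply/negP => /andP[/eqP Hpx Hxv].
case/orP: Hp => /eqP Hp.
  by apply: (child_nochild Hx Hxv Hpx Hu0 Hux Hp).
by rewrite -Hp Hpx eqxx in Huv.
Qed.

Lemma valency' u : u \in vert G' -> u != vi -> valency G' u = valency G u.
Proof.
move=> Hu Huv; rewrite /valency; apply: eq_card => x; rewrite !inE nbr'E Hu /=.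
by case Hn: (nbr G u x) => //=; rewrite (nbr_vert' Hu Huv Hn).
Qed.

Lemma node'E u : node G' u = node G u && (u != vi).
Proof.
case: (eqVneq u vi) => [->|Huv]; first by rewrite /node /= eqxx orbT /= !andbF.
rewrite andbT.
case Hu: (u \in vert G').
  by rewrite /node (valency' Hu Huv) Hu (vert'_vert Hu) /= (negbTE Huv) orbF.
rewrite /node Hu /=; symmetry.
case Hu0: (u \in vert G) => //=.
move: Hu; rewrite vertE Hu0 /= => /negbFE /andP[/eqP Hp Hv].
by rewrite (child_val Hu0 Hv Hp) eqxx andbF.
Qed.


Definition Fv v w := \prod_(x | nbr G vi x && ~~ onpath G v w x) wt G vi x.

Lemma lk_split v w :
  lk G v w = (if onpath G v w vi then Fv v w else 1) * lk G' v w.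
Proof.
have E : lk G' v w = \prod_(u | node G u && onpath G v w u && (u != vi))
    \prod_(x | nbr G u x && ~~ onpath G v w x) wt G u x.
  rewrite /lk; apply: eq_big => [u|u]; first by rewrite node'E andbAC.
  case/andP => Hn' _; have Hu : u \in vert G' by case/and3P: Hn'.
  move: Hn'; rewrite node'E => /andP[Hn Huv].
  apply: eq_bigl => x; rewrite nbr'E Hu /=.
  by case Hx: (nbr G u x) => //=; rewrite (nbr_vert' Hu Huv Hx).
rewrite E /lk; case Ho: (onpath G v w vi).
  by rewrite (bigD1 vi) /= ?Ho ?Hnode.
rewrite mul1r; apply: eq_bigl => u.
by case: (eqVneq u vi) => [->|]; rewrite ?Ho ?andbF ?andbT.
Qed.


Lemma onpath'E v w u : onpath G' v w u = onpath G v w u.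
Proof. by []. Qed.

Lemma ancE v u : v \in vert G -> (u \in anc G v) <-> R G v u.
Proof. exact: ancP. Qed.

Lemma lk_same a b : a \in vert G' -> a != vi -> b \in vert G' -> b != vi ->
  lk G a b = lk G' a b.
Proof.
move=> Ha Hav Hb Hbv; rewrite lk_split.
suff -> : onpath G a b vi = false by rewrite mul1r.
apply/negbTE; rewrite /onpath inE negb_and; apply/orP; left.
apply/negP => /orP[] /ancE H.
  by apply: (notR Ha Hav); apply: H; apply: vert'_vert.
by apply: (notR Hb Hbv); apply: H; apply: vert'_vert.
Qed.

Lemma ancLi u : (u \in anc G Li) = (u == Li) || (u \in anc G vi).
Proof.
apply/idP/idP.
  move/(ancE _ Li_vert) => [[|n] Hn]; first by rewrite -Hn eqxx.
  apply/orP; right; apply/(ancE _ vi_vert); exists n.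
  by rewrite -Hn iterSr par_Li.
case/orP => [/eqP ->|/(ancE _ vi_vert) [n Hn]]; apply/(ancE _ Li_vert).
  by exists 0%N.
by exists n.+1; rewrite iterSr par_Li.
Qed.

Section LiB.
Variable b : T.
Hypotheses (Hb : b \in vert G') (Hbv : b != vi).

Let Hb0 : b \in vert G. Proof. exact: vert'_vert. Qed.

Let nRb : ~ R G b vi. Proof. exact: notR. Qed.

Let RLi : R G Li vi. Proof. by exists 1%N; rewrite /= par_Li. Qed.

Let nRbL : ~ R G b Li. Proof. by move=> H; apply: nRb; apply: (R_trans H RLi). Qed.

Let in_ancb x : x \in anc G b -> R G b x. Proof. by move/(ancE _ Hb0). Qed.

Let ancb_vert x : x \in anc G b -> x \in vert G.
Proof. by move/in_ancb; apply: R_vert. Qed.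

Let Li_nanc : (Li \in anc G b) = false.
Proof. by apply/negP => /in_ancb. Qed.

Let vi_anc : vi \in anc G vi. Proof. by apply/(ancE _ vi_vert); exists 0%N. Qed.

Let Ex_anc u : [exists x in anc G Li :&: anc G b, (x != u) && (u \in anc G x)] ->
  exists2 x, R G b x & ((x != u) /\ R G x u) /\ (x = Li \/ R G vi x).
Proof.
case/existsP => x /andP[]; rewrite inE => /andP[HxL Hxb] /andP[Hxu Hux].
have Hx := ancb_vert Hxb.
exists x; first exact: in_ancb.
split; first by split => //; apply/(ancE _ Hx).
by move: HxL; rewrite ancLi => /orP[/eqP ->|/(ancE _ vi_vert) H]; [left|right].
Qed.

Lemma onpath_vi : onpath G Li b vi.
Proof.
rewrite /onpath; apply/andP; split.
  by rewrite inE ancLi vi_anc orbT.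
apply/negP => /Ex_anc [x Hbx [[_ Hxv] _]].
by apply: nRb; apply: R_trans Hbx Hxv.
Qed.

Lemma onpath_p : onpath G Li b p.
Proof.
rewrite /onpath; apply/andP; split.
  by rewrite inE ancLi; apply/orP; left; apply/orP; right; apply/(ancE _ vi_vert); exists 1%N.
apply/negP => /Ex_anc [x Hbx [[Hxp Hxp'] [HL|[[|n] Hn]]]].
- by apply: nRbL; move: Hbx; rewrite HL.
- by apply: nRb; move: Hbx; rewrite -Hn.
- move/negP: Hxp; apply; apply/eqP; apply: (R_antisym Hwf (par_vert Hwf vi_vert)) => //.
  by exists n; rewrite -Hn iterSr.
Qed.

Lemma onpath_L : onpath G Li b Li.
Proof.
rewrite /onpath; apply/andP; split.
  by rewrite inE ancLi eqxx.
apply/negP => /Ex_anc [x Hbx [[_ HxL] _]].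
by apply: nRbL; apply: R_trans Hbx HxL.
Qed.

Lemma onpath_child x : x \in vert G -> x != vi -> par G x = vi -> x != Li ->
  onpath G Li b x = false.
Proof.
move=> Hx Hxv Hpx HxL; apply/negbTE; rewrite /onpath negb_and; apply/orP; left.
have Rxv : R G x vi by exists 1%N.
rewrite inE ancLi (negbTE HxL) /= negb_or; apply/andP; split.
  apply/negP => /(ancE _ vi_vert) Hvx.
  by move/negP: Hxv; apply; apply/eqP; apply: (R_antisym Hwf vi_vert).
by apply/negP => /in_ancb Hbx; apply: nRb; apply: R_trans Hbx Rxv.
Qed.

Lemma Fv_beta : Fv Li b = beta G vi Li.
Proof.
rewrite /Fv /beta; apply: eq_bigl => x.
case Hn: (nbr G vi x) => //=.
case: (eqVneq x p) => [->|Hxp]; first by rewrite onpath_p.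
have Hpx : par G x = vi.
  by case/and4P: Hn => _ _ _ /orP[/eqP H|/eqP //]; rewrite H eqxx in Hxp.
case: (eqVneq x Li) => [->|HxL]; first by rewrite onpath_L.
case/and4P: Hn => _ Hx Hvx _.
by rewrite onpath_child // eq_sym.
Qed.

Lemma anc_eq : anc G Li :&: anc G b = anc G vi :&: anc G b.
Proof.
apply/setP => x; rewrite !in_setI ancLi.
by case: (eqVneq x Li) => [->|] //=; rewrite Li_nanc !andbF.
Qed.

Lemma onpath_eq u : u != Li -> onpath G Li b u = onpath G vi b u.
Proof. by move=> Hu; rewrite /onpath anc_eq in_setU ancLi (negbTE Hu) in_setU. Qed.

Lemma lk'_Li : lk G' Li b = lk G' vi b.
Proof.
rewrite /lk; apply: eq_big => [u|u _].
  case: (eqVneq u Li) => [->|Hu]; last by rewrite !onpath'E onpath_eq.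
  by rewrite /node /= Li_vert'.
apply: eq_bigl => x; case Hn: (nbr G' u x) => //=.
have HxL : x != Li.
  by apply/negP => /eqP Hx; move: Hn; rewrite nbr'E Hx Li_vert' !andbF.
by rewrite !onpath'E onpath_eq.
Qed.

Lemma lk_Li : lk G Li b = beta G vi Li * lk G' vi b.
Proof. by rewrite lk_split onpath_vi Fv_beta lk'_Li. Qed.

End LiB.


Lemma vi_narrow : arrow G vi = false.
Proof. by case/and3P: Hnode => _ /negbTE. Qed.

Lemma AV b : arrowv G b -> b != Li -> b \in vert G' /\ b != vi.
Proof.
case/andP=> Hb Ha HbL.
have Hbv : b != vi by apply/negP => /eqP E; move: Ha; rewrite E vi_narrow.
split => //; rewrite vertE Hb /= Hbv andbT; apply/negP => /eqP Hp.
move/negP: HbL; apply; apply/eqP; apply: Huniq; first by rewrite /arrowv Hb.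
by rewrite /nbr vi_vert Hb eq_sym Hbv Hp eqxx orbT.
Qed.

Lemma arrowv'E j : arrowv G' j = (arrowv G j && (j != Li)) || (j == vi).
Proof.
case: (eqVneq j vi) => [->|Hjv]; first by rewrite /arrowv vi_vert' /= eqxx !orbT.
rewrite orbF; case: (eqVneq j Li) => [->|HjL]; first by rewrite /arrowv Li_vert' andbF.
rewrite /= andbT /arrowv /= (negbTE Hjv) orbF.
case Ha: (arrow G j); rewrite ?andbF ?andbT //.
apply/idP/idP; first exact: vert'_vert.
move=> Hj; have Hj0 : arrowv G j by rewrite /arrowv Hj Ha.
by case: (AV Hj0 HjL).
Qed.

Lemma sum_eq (V : nmodType) (f : int -> V) v (Q : pred T) :
  v \in vert G' -> v != vi -> Q Li -> Q vi ->
  \sum_(j | arrowv G j && Q j) f (mult G j * lk G v j) =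
  \sum_(j | arrowv G' j && Q j) f (mult G' j * lk G' v j).
Proof.
move=> Hv Hvv QL Qv.
rewrite (bigD1 Li) /=; last by rewrite HLa QL.
rewrite [RHS](bigD1 vi) /=; last by rewrite arrowv'E eqxx orbT Qv.
congr (_ + _).
  by rewrite eqxx lkC lk_Li // (lkC G' vi) mulrA (mulrC (mult G Li)).
apply: eq_big => j.
  rewrite arrowv'E; case: (eqVneq j vi) => [->|Hjv].
    by rewrite /arrowv vi_narrow !andbF.
  by rewrite orbF !andbT; case: (arrowv G j); case: (Q j); case: (j != Li).
case/andP => /andP[Ha _] HjL; case: (AV Ha HjL) => Hj Hjv.
by rewrite (negbTE Hjv) lk_same.
Qed.


Definition sg a := if a == Li then vi else a.
Definition cc a : rat := if a == Li then ((beta G vi Li)%:~R : rat) else 1.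

Lemma part1 : [set a | arrowv G' a] = [set sg a | a in [set a | arrowv G a]].
Proof.
apply/setP => a; rewrite inE arrowv'E; apply/idP/imsetP.
  case/orP => [/andP[Ha HaL]|/eqP ->].
    by exists a; rewrite ?inE // /sg (negbTE HaL).
  by exists Li; rewrite ?inE // /sg eqxx.
case=> b; rewrite inE /sg => Hb ->.
case: (eqVneq b Li) => [Eb|HbL]; first by rewrite eqxx orbT.
by rewrite Hb HbL.
Qed.

Lemma part2 a b : arrowv G a -> arrowv G b ->
  lkm G a b = cc a * cc b * lkm G' (sg a) (sg b).
Proof.
move=> Ha Hb; rewrite /cc /sg.
case: (eqVneq a Li) => [Ea|HaL]; case: (eqVneq b Li) => [Eb|HbL].
- subst a b; rewrite /lkm !eqxx /=.
  have -> : \sum_(j | arrowv G j && (j != Li)) ((mult G j * lk G Li j)%:~R : rat) =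
     (beta G vi Li)%:~R * \sum_(j | arrowv G' j && (j != vi))
        ((mult G' j * lk G' vi j)%:~R : rat).
    rewrite mulr_sumr; apply: eq_big => j.
      rewrite arrowv'E; case: (eqVneq j vi) => [->|Hjv].
        by rewrite /arrowv vi_narrow !andbF.
      by rewrite orbF andbT.
    case/andP => Ha' HjL; case: (AV Ha' HjL) => Hj Hjv.
    by rewrite /= (negbTE Hjv) lk_Li // [X in X%:~R = _]mulrCA [LHS]intrM.
  by rewrite eqxx intrM alg.
- subst a; have [Hb' Hbv] := AV Hb HbL.
  rewrite /lkm eq_sym HbL eq_sym Hbv /= mulr1 lk_Li //.
  by rewrite intrM.
- subst b; have [Ha' Hav] := AV Ha HaL.
  rewrite /lkm HaL Hav /= mul1r lkC lk_Li // (lkC G' vi) intrM.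
  by rewrite mulrC.
- have [Ha' Hav] := AV Ha HaL; have [Hb' Hbv] := AV Hb HbL.
  rewrite !mul1r /lkm; case: (eqVneq a b) => [<-|Hab] /=.
    rewrite (negbTE Hav).
    rewrite (sum_eq (fun x : int => (x%:~R : rat)) (Q := fun j => j != a)) //.
      by rewrite eq_sym.
    by rewrite eq_sym.
  by rewrite lk_same.
Qed.

Lemma part3 : condA G -> condB G -> condC G -> [/\ condA G', condB G' & condC G'].
Proof.
move=> HA HB HC; split.
- move=> v; rewrite node'E => /andP[Hn Hv]; case: (HA v Hn) => H1 H2; split.
    by move=> x; rewrite nbr'E => /and3P[Hx _ _] Hp; apply: H1.
  exact: H2.
- by move=> v w; rewrite !node'E => /andP[Hv _] /andP[Hw _]; apply: HB.
- move=> v Hv; rewrite /vmult /=.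
  case: (eqVneq v vi) => [->|Hvv].
    rewrite ?eqxx ?orbT; apply: mulr_gt0.
      apply: prodr_gt0 => x /andP[/andP[Hn Hxp] _].
      by case: (HA vi Hnode) => H _; apply: H.
    by move: (HC Li Li_vert); rewrite /vmult; case/andP: HLa => _ ->.
  rewrite ?orbF.
  have Hv0 := vert'_vert Hv.
  case Ha: (arrow G v); first by move: (HC v Hv0); rewrite /vmult Ha.
  move: (HC v Hv0); rewrite /vmult Ha.
  suff -> : Mv G v = Mv G' v by [].
  rewrite /Mv.
  transitivity (\sum_(j | arrowv G j && predT j) mult G j * lk G v j).
    by apply: eq_bigl => j; rewrite andbT.
  rewrite (sum_eq (fun x : int => x) (Q := predT)) //.
  by apply: eq_bigl => j; rewrite andbT.
Qed.

End Main.

Theorem lemma3p17 (T : finType) (G : diagram T) (vi Li : T) :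
  wf G ->
  node G vi -> vi != droot G ->
  (forall w, node G w -> vi \in anc G w -> w = vi) ->
  arrowv G Li -> nbr G vi Li -> Li != par G vi ->
  (forall a, arrowv G a -> nbr G vi a -> a = Li) ->
  (forall x, nbr G vi x -> x != par G vi -> x != Li -> leaf G x) ->
  let G' := collapse G vi Li in
  let sigma := fun a : T => if a == Li then vi else a in
  let c := fun a : T => if a == Li then ((beta G vi Li)%:~R : rat) else 1 in
  [/\ [set a | arrowv G' a] = [set sigma a | a in [set a | arrowv G a]],
      (forall a b, arrowv G a -> arrowv G b ->
         lkm G a b = c a * c b * lkm G' (sigma a) (sigma b)) &
      (condA G -> condB G -> condC G -> [/\ condA G', condB G' & condC G'])].
Proof.
move=> Hwf Hnode Hnr _ HLa HLn HLp Huniq Hleaf G' sigma c; split.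
- exact: (part1 Hnode HLa HLn HLp Huniq).
- move=> a b; exact: (part2 Hwf Hnode Hnr HLa HLn HLp Huniq Hleaf).
- exact: (part3 Hwf Hnode Hnr HLa HLn HLp Huniq Hleaf).
Qed.
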